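(* Let $s\geq 3$, let $p,q$ be coprime integers, and let $k\in G_{K_s}(p,q)$ be any element with $M=k^q$ and $L=k^{-p}$. Then $$k^{p-(4s+7)q}=l^{-1}c^{-1}l^{-s}c^{-1}l^{-s}c^{-1}l^{-1}.$$
   Context: Let $R=c\,l\,c\,l^{-1}c^{-1}l^{-s}c^{-1}l^{-1}c\,l\,c\,l^{s-1}$, $M=c$ and $L=c^{-(2s-2)}\,l\,c\,l^{s}\,c\,l^{s}\,c\,l\,c^{-(2s+9)}$. Define $G_{K_s}(p,q)=\langle c,l\mid R,\ M^pL^q\rangle$ (the fundamental group of $p/q$ surgery on the $(-2,3,2s+1)$-pretzel knot). *)

(* Defs.v *)
From Stdlib Require Import ZArith.
Open Scope Z_scope.

Record Group := {
  gcar :> Type;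
  gmul : gcar -> gcar -> gcar;
  gone : gcar;
  ginv : gcar -> gcar;
  gmulA : forall x y z, gmul x (gmul y z) = gmul (gmul x y) z;
  gmul1x : forall x, gmul gone x = x;
  gmulx1 : forall x, gmul x gone = x;
  gmulVx : forall x, gmul (ginv x) x = gone;
  gmulxV : forall x, gmul x (ginv x) = gone
}.

Arguments gmul {g}.
Arguments gone {g}.
Arguments ginv {g}.

Definition zpow {G : Group} (x : G) (n : Z) : G :=
  match n with
  | Z0 => gone
  | Zpos m => Pos.iter (gmul x) gone m
  | Zneg m => ginv (Pos.iter (gmul x) gone m)
  end.

Declare Scope group_scope.
Notation "x * y" := (gmul x y) : group_scope.
Notation "x ^ n" := (zpow x n) : group_scope.
Delimit Scope group_scope with g.

(* The relator R, the meridian M and the longitude L of the (-2,3,2s+1)-pretzel knot. *)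
Definition relR {G : Group} (s : Z) (c l : G) : G :=
  (c * l * c * l^(-1) * c^(-1) * l^(-s) * c^(-1) * l^(-1) * c * l * c * l^(s-1))%g.

Definition merM {G : Group} (c l : G) : G := c.

Definition lonL {G : Group} (s : Z) (c l : G) : G :=
  (c^(-(2*s-2)) * l * c * l^s * c * l^s * c * l * c^(-(2*s+9)))%g.

(* (c,l) satisfies the defining relations of G_{K_s}(p,q) = < c, l | R, M^p L^q >. *)
Definition satisfies_GKs {G : Group} (s p q : Z) (c l : G) : Prop :=
  relR s c l = gone /\ ((merM c l)^p * (lonL s c l)^q)%g = gone.

(* Main.v *)
Require Import Defs.
From Stdlib Require Import ZArith Lia.
Open Scope Z_scope.

Section GT.
Variable G : Group.
Implicit Types x y z : G.

Lemma gcancel_r x y z : gmul x z = gmul y z -> x = y.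
Proof.
  intro H. rewrite <- (gmulx1 G x), <- (gmulx1 G y), <- (gmulxV G z), !gmulA, H.
  reflexivity.
Qed.

Lemma ginv_uniq x y : gmul x y = gone -> x = ginv y.
Proof. intro H. apply (gcancel_r _ _ y). rewrite H, gmulVx. reflexivity. Qed.

Lemma ginv_mul x y : ginv (gmul x y) = gmul (ginv y) (ginv x).
Proof.
  symmetry. apply ginv_uniq.
  rewrite <- gmulA, (gmulA _ (ginv x)), gmulVx, gmul1x, gmulVx. reflexivity.
Qed.

Lemma ginv_inv x : ginv (ginv x) = x.
Proof. symmetry. apply ginv_uniq. apply gmulxV. Qed.

Lemma iter_comm x m :
  gmul (Pos.iter (gmul x) gone m) x = gmul x (Pos.iter (gmul x) gone m).
Proof.
  induction m using Pos.peano_ind.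
  - simpl. rewrite gmulx1. reflexivity.
  - rewrite Pos.iter_succ. rewrite <- gmulA, IHm. reflexivity.
Qed.

Lemma zpow_succ x n : zpow x (Z.succ n) = gmul (zpow x n) x.
Proof.
  destruct n as [|m|m]; simpl.
  - rewrite gmul1x, gmulx1. reflexivity.
  - rewrite Pos.add_1_r, Pos.iter_succ, iter_comm. reflexivity.
  - destruct m as [|m] using Pos.peano_case.
    + simpl. rewrite gmulx1, gmulVx. reflexivity.
    + rewrite <- Pos.add_1_r.
      replace (Z.pos_sub 1 (m + 1)) with (Z.neg m).
      2:{ rewrite Z.pos_sub_lt. { f_equal. symmetry. apply Pos.add_sub. } rewrite Pos.add_1_r. apply Pos.lt_1_succ. }
      simpl. rewrite Pos.add_1_r, Pos.iter_succ, ginv_mul, <- gmulA, gmulVx, gmulx1.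
      reflexivity.
Qed.

Lemma zpow_pred x n : zpow x (Z.pred n) = gmul (zpow x n) (ginv x).
Proof.
  rewrite <- (Z.succ_pred n) at 2. rewrite zpow_succ, <- gmulA, gmulxV, gmulx1.
  reflexivity.
Qed.

Lemma zpow_add x a b : zpow x (a + b) = gmul (zpow x a) (zpow x b).
Proof.
  induction b using Z.peano_ind.
  - rewrite Z.add_0_r. simpl. rewrite gmulx1. reflexivity.
  - rewrite Z.add_succ_r, !zpow_succ, IHb, gmulA. reflexivity.
  - rewrite Z.add_pred_r, !zpow_pred, IHb, gmulA. reflexivity.
Qed.

Lemma zpow_mul x a n : zpow (zpow x a) n = zpow x (a * n).
Proof.
  induction n using Z.peano_ind.
  - rewrite Z.mul_0_r. reflexivity.
  - rewrite zpow_succ, IHn, Z.mul_succ_r, zpow_add. reflexivity.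
  - rewrite zpow_pred, IHn, Z.mul_pred_r. replace (a*n - a) with (a*n + -a) by lia. rewrite zpow_add. f_equal.
    symmetry. apply ginv_uniq. rewrite <- zpow_add. replace (-a+a) with 0 by lia.
    reflexivity.
Qed.

Lemma zpow_opp x n : zpow x (- n) = ginv (zpow x n).
Proof.
  apply ginv_uniq. rewrite <- zpow_add. replace (-n+n) with 0 by lia. reflexivity.
Qed.

Lemma zpow1 x : zpow x 1 = x.
Proof. simpl. apply gmulx1. Qed.

Lemma zpow_m1 x : zpow x (-1) = ginv x.
Proof. simpl. rewrite gmulx1. reflexivity. Qed.

End GT.

Theorem fact3p2 (G : Group) (s p q : Z) (c l k : G) :
  3 <= s -> Z.gcd p q = 1 ->
  satisfies_GKs s p q c l ->
  merM c l = (k ^ q)%g -> lonL s c l = (k ^ (- p))%g ->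
  (k ^ (p - (4*s+7)*q))%g =
    (l^(-1) * c^(-1) * l^(-s) * c^(-1) * l^(-s) * c^(-1) * l^(-1))%g.
Proof.
  intros _ _ _ HM HL. unfold merM in HM. unfold lonL in HL.
  set (V := (l * c * l^s * c * l^s * c * l)%g).
  assert (HV : (c^(-(2*s-2)) * V * c^(-(2*s+9)))%g = (k^(-p))%g).
  { rewrite <- HL. unfold V. rewrite !gmulA. reflexivity. }
  assert (HV2 : V = (c^(2*s-2) * k^(-p) * c^(2*s+9))%g).
  { rewrite <- HV. rewrite !gmulA, <- (zpow_add _ c), Z.add_opp_diag_r, gmul1x.
    rewrite <- !gmulA, <- (zpow_add _ c), Z.add_opp_diag_l, gmulx1. reflexivity. }
  rewrite HM, !zpow_mul, <- !zpow_add in HV2.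
  assert (E : (l^(-1) * c^(-1) * l^(-s) * c^(-1) * l^(-s) * c^(-1) * l^(-1))%g = ginv V).
  { unfold V. rewrite !zpow_m1, !zpow_opp, !ginv_mul, <- !gmulA. reflexivity. }
  rewrite E. apply ginv_uniq. rewrite HV2, <- zpow_add.
  replace (p - (4 * s + 7) * q + (q * (2 * s - 2) + - p + q * (2 * s + 9))) with 0 by lia.
  reflexivity.
Qed.
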